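(* Let $d, n$ be positive integers and let $\delta \ge 0$ satisfy $\delta n < 1$. Let $\mathbf{v}_1, \ldots, \mathbf{v}_n \in \mathbb{R}^d$ be unit vectors that are pairwise $\delta$-orthogonal, i.e. $|\mathbf{v}_i \cdot \mathbf{v}_j| \le \delta$ for all $i \neq j$. Let $\mathbf{z} = (z_1, \ldots, z_n)^T \in \mathbb{R}^n$ and suppose that $\mathbf{y} = \sum_{k=1}^n z_k \mathbf{v}_k$ (equivalently $\mathbf{y} = \mathbf{A}\mathbf{z}$ with $\mathbf{A} = [\mathbf{v}_1, \ldots, \mathbf{v}_n]$) satisfies $\lVert \mathbf{y} \rVert_2 = 1$. Then $$\left|\sum_{k=1}^{n} z_k\right| \le \lVert \mathbf{z} \rVert_1 \le \sqrt{\frac{n}{1 - \delta n}}.$$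
   Context: $\lVert \cdot \rVert_1$ and $\lVert \cdot \rVert_2$ denote the $\ell_1$ and Euclidean norms. Two unit vectors are called $\delta$-orthogonal if the absolute value of their dot product is at most $\delta$. *)

(* Defs.v *)
From mathcomp Require Import all_boot all_order all_algebra.
Set Implicit Arguments. Unset Strict Implicit. Unset Printing Implicit Defensive.
Import Order.TTheory GRing.Theory Num.Theory.
Local Open Scope ring_scope.

Definition dotv (R : realFieldType) (d : nat) (u v : 'rV[R]_d) : R :=
  \sum_(i < d) u 0 i * v 0 i.

Definition norm2 (R : rcfType) (d : nat) (u : 'rV[R]_d) : R :=
  Num.sqrt (dotv u u).

Definition norm1 (R : realFieldType) (n : nat) (z : 'rV[R]_n) : R :=
  \sum_(k < n) `|z 0 k|.

Definition delta_orth (R : realFieldType) (d : nat) (delta : R) (u v : 'rV[R]_d) : Prop :=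
  `|dotv u v| <= delta.

(* Main.v *)
Require Import Defs.
From mathcomp Require Import all_boot all_order all_algebra.
From mathcomp Require Import ring lra.
Import Order.TTheory GRing.Theory Num.Theory.
Local Open Scope ring_scope.

Lemma dot_ge0 (R : rcfType) d (u : 'rV[R]_d) : 0 <= dotv u u.
Proof. by apply: sumr_ge0 => i _; rewrite -expr2 sqr_ge0. Qed.

Lemma norm2_1 (R : rcfType) d (u : 'rV[R]_d) : norm2 u = 1 -> dotv u u = 1.
Proof. by move=> h; rewrite -(sqr_sqrtr (dot_ge0 _ _ u)) -/(norm2 u) h expr1n. Qed.

Lemma dot_sum (R : rcfType) d n (v : 'I_n -> 'rV[R]_d) (z : 'rV[R]_n) :
  dotv (\sum_(k < n) z 0 k *: v k) (\sum_(k < n) z 0 k *: v k) =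
  \sum_(k < n) \sum_(l < n) z 0 k * z 0 l * dotv (v k) (v l).
Proof.
rewrite /dotv.
under eq_bigr => i _ do rewrite !summxE mulr_suml.
rewrite exchange_big /=; apply: eq_bigr => k _.
under eq_bigr => i _ do rewrite mulr_sumr.
rewrite exchange_big /=; apply: eq_bigr => l _.
rewrite mulr_sumr; apply: eq_bigr => i _; rewrite !mxE; ring.
Qed.

Theorem mainTheorem1 (R : rcfType) (d n : nat) (delta : R)
  (v : 'I_n -> 'rV[R]_d) (z : 'rV[R]_n) :
  (0 < d)%N -> (0 < n)%N ->
  0 <= delta -> delta * n%:R < 1 ->
  (forall i, norm2 (v i) = 1) ->
  (forall i j, i != j -> delta_orth delta (v i) (v j)) ->
  norm2 (\sum_(k < n) z 0 k *: v k) = 1 ->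
  `|\sum_(k < n) z 0 k| <= norm1 z /\
  norm1 z <= Num.sqrt (n%:R / (1 - delta * n%:R)).
Proof.
move=> _ _ d0 dn hv ho hy.
split; first exact: ler_norm_sum.
have S1ge0 : 0 <= norm1 z by apply: sumr_ge0 => i _.
set S1 := norm1 z.
set S2 := \sum_(k < n) z 0 k ^+ 2.
have sq1 : S1 ^+ 2 = \sum_(k < n) \sum_(l < n) `|z 0 k| * `|z 0 l|.
  rewrite expr2 /S1 /norm1 mulr_suml; apply: eq_bigr => k _.
  by rewrite mulr_sumr.
have key : 1 >= S2 - delta * S1 ^+ 2.
  move/(norm2_1 _ _ _): hy; rewrite dot_sum => <-.
  have -> : S2 - delta * S1 ^+ 2 = \sum_(k < n) \sum_(l < n)
      ((if k == l then z 0 k ^+ 2 else 0) - delta * (`|z 0 k| * `|z 0 l|)).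
    rewrite sq1 mulr_sumr /S2 -sumrB; apply: eq_bigr => k _.
    rewrite mulr_sumr sumrB; congr (_ - _).
    by rewrite -big_mkcond /= (big_pred1 k) // => l; rewrite eq_sym.
  apply: ler_sum => k _; apply: ler_sum => l _.
  case: eqP => [<-|/eqP kl].
    rewrite (norm2_1 _ _ _ (hv k)) mulr1 -normrM -expr2 ger0_norm ?sqr_ge0 //.
    by rewrite gerBl mulr_ge0 // sqr_ge0.
  have := ho _ _ kl; rewrite /delta_orth => hd.
  rewrite sub0r lerNl -mulrA -normrM.
  apply: le_trans (ler_norm _) _.
  rewrite normrN !normrM.
  have := normr_ge0 (z 0 k); have := normr_ge0 (z 0 l).
  set a := `|z 0 k|; set b := `|z 0 l|; move: hd; set c := `|dotv _ _|.
  move=> hc hb ha; rewrite mulrA [delta * _]mulrC.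
  have hab := mulr_ge0 ha hb; move: hab; set p := a * b; nra.
have cs : S1 ^+ 2 <= n%:R * S2.
  rewrite sq1.
  apply: (@le_trans _ _ (\sum_(k < n) \sum_(l < n) (z 0 k ^+ 2 + z 0 l ^+ 2) / 2)).
    apply: ler_sum => k _; apply: ler_sum => l _.
    rewrite -(real_normK (num_real (z 0 k))) -(real_normK (num_real (z 0 l))).
    set a := `|z 0 k|; set b := `|z 0 l|.
    have : 0 <= (a - b) ^+ 2 by rewrite sqr_ge0.
    lra.
  under eq_bigr => k _ do rewrite -mulr_suml big_split /= sumr_const card_ord.
  rewrite -mulr_suml big_split /= sumr_const card_ord -/S2.
  rewrite sumrMnl -/S2.
  rewrite -[S2 *+ n]mulr_natl; lra.
have key2 : S1 ^+ 2 <= n%:R / (1 - delta * n%:R).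
  rewrite ler_pdivlMr ?subr_gt0 //.
  have n0 : 0 <= n%:R :> R by [].
  have h := ler_wpM2l n0 key; move: h cs; set A := S1 ^+ 2; set N := (n%:R : R); move=> h cs; nra.
have S1g : 0 <= S1 by []. rewrite -(ger0_norm S1g) -sqrtr_sqr.
exact: ler_wsqrtr.
Qed.
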